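(* Let $H$ be a connected graph of order $a \in \mathbb{N}$. Then for every $b \in \mathbb{N}$, $R_\mathrm{ord}(H, P_b^\mathrm{mon}) = 1 + (a-1)(b-1)$.
   Context: All graphs are finite, simple and undirected, and a graph of order $n$ has vertex set $\{0,1,\ldots,n-1\}$; $K_n$ is the complete graph on $\{0,\ldots,n-1\}$. A $2$-edge-coloring of $K_n$ assigns each edge a color in $\{1,2\}$. For a graph $H$ and such a coloring, an embedding of $H$ in color $j$ is an injective map $\varphi\colon V(H)\to V(K_n)$ such that for every edge $uv$ of $H$ the edge $\{\varphi(u),\varphi(v)\}$ has color $j$; it is increasing if $\varphi(0)<\varphi(1)<\cdots<\varphi(|H|-1)$. The ordered Ramsey number $R_\mathrm{ord}(H_1,H_2)$ is the smallest $n\in\mathbb{N}$ such that every $2$-edge-coloring of $K_n$ admits an increasing embedding of $H_1$ in color $1$ or an increasing embedding of $H_2$ in color $2$. The monotone path $P_n^\mathrm{mon}$ is the graph of order $n$ in which two vertices are adjacent iff they are consecutive integers. *)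

(* Defs.v *)
From mathcomp Require Import all_boot.
Set Implicit Arguments. Unset Strict Implicit. Unset Printing Implicit Defensive.

Definition simple_graph (n : nat) (G : rel 'I_n) : Prop :=
  symmetric G /\ irreflexive G.

Definition connected_graph (n : nat) (G : rel 'I_n) : Prop :=
  forall u v : 'I_n, connect G u v.

Definition mon_path (n : nat) : rel 'I_n :=
  fun u v => (u.+1 == v :> nat) || (v.+1 == u :> nat).

(* A 2-edge-colouring of K_n: a symmetric colour function on pairs of
   distinct vertices, with colours in {1,2} (values on the diagonal are
   irrelevant). *)
Definition two_coloring (n : nat) (c : 'I_n -> 'I_n -> nat) : Prop :=
  (forall x y, c x y = c y x) /\
  (forall x y, x != y -> c x y = 1 \/ c x y = 2).

Definition incr_embedding (m n : nat) (H : rel 'I_m) (c : 'I_n -> 'I_n -> nat)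
  (j : nat) (phi : 'I_m -> 'I_n) : Prop :=
  injective phi /\
  (forall u v, H u v -> c (phi u) (phi v) = j) /\
  (forall u v : 'I_m, (u < v)%N -> (phi u < phi v)%N).

Definition arrows (m1 m2 : nat) (H1 : rel 'I_m1) (H2 : rel 'I_m2) (n : nat) : Prop :=
  forall c : 'I_n -> 'I_n -> nat, two_coloring c ->
    (exists phi, incr_embedding H1 c 1 phi) \/ (exists psi, incr_embedding H2 c 2 psi).

Definition is_ord_ramsey (m1 m2 : nat) (H1 : rel 'I_m1) (H2 : rel 'I_m2) (N : nat) : Prop :=
  arrows H1 H2 N /\ (forall n, arrows H1 H2 n -> (N <= n)%N).
Arguments mon_path : clear implicits.

(* Main.v *)
Require Import Defs.
From mathcomp Require Import all_boot.
From mathcomp Require Import zify.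
Set Implicit Arguments. Unset Strict Implicit.

Lemma chain_lb (g : nat -> nat) k :
  (forall i, i.+1 < k -> g i < g i.+1) -> forall j, j < k -> g 0 + j <= g j.
Proof.
move=> H; elim=> [|j IH] Hj; first by rewrite addn0.
have := H j Hj; have := IH (ltnW Hj); lia.
Qed.

Lemma chain_lt (g : nat -> nat) k :
  (forall i, i.+1 < k -> g i < g i.+1) -> forall i j, i < j -> j < k -> g i < g j.
Proof.
move=> H i; elim=> [//|j IH] Hij Hj.
rewrite ltnS leq_eqVlt in Hij; case/orP: Hij => [/eqP->|Hij]; first exact: H.
exact: ltn_trans (IH Hij (ltnW Hj)) (H j Hj).
Qed.

Lemma lower (a b n : nat) (H : rel 'I_a) : 1 <= a -> 1 <= b ->
  connected_graph H -> arrows H (mon_path b) n -> 1 + (a-1)*(b-1) <= n.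
Proof.
case: a H => [//|a'] H _; case: b => [//|b'] _ Hc Har.
rewrite leqNgt; apply/negP => Hn.
have Hn' : n <= a' * b' by move: Hn; rewrite !subn1 /=; lia.
pose c := fun x y : 'I_n => if (x %/ a' == y %/ a') then 1 else 2.
have cc : two_coloring c.
  split => x y; rewrite /c; first by rewrite eq_sym.
  by case: ifP; auto.
have d0 : forall x : 'I_n, 0 < a'.
  move=> [x xn] /=; rewrite lt0n; apply/eqP => d0; move: Hn'; rewrite d0 mul0n; lia.
case: (Har c cc) => [[phi [inj [ed inc]]] | [psi [inj [ed inc]]]].
- have da := d0 (phi ord0).
  pose P := [pred u | phi u %/ a' == phi ord0 %/ a'].
  have cl : closed H P.
    move=> x y Hxy; rewrite !inE; have := ed _ _ Hxy; rewrite /c.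
    case: ifP => // /eqP -> _; done.
  have blk : forall u, phi u %/ a' = phi ord0 %/ a'.
    move=> u; have := closed_connect cl (Hc ord0 u); rewrite !inE eqxx => /esym/eqP; done.
  pose g i := val (phi (inord i)).
  have ch : forall i, i.+1 < a'.+1 -> g i < g i.+1.
    move=> i Hi; apply: inc; rewrite !inordK //; lia.
  have := @chain_lb g _ ch a' (ltnSn a').
  have := blk (inord a'); have := blk (inord 0).
  rewrite /g => E1 E2; rewrite (_ : inord 0 = ord0); last by apply: val_inj; rewrite /= inordK.
  move=> Hle; have := leq_div2r a' Hle.
  rewrite divnDr // divnn da E2 -{2}E1 (_ : inord 0 = ord0) ?addn1 ?ltnn //.
  by apply: val_inj; rewrite /= inordK.
- have da := d0 (psi ord0).
  pose h i := val (psi (inord i)) %/ a'.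
  have ch : forall i, i.+1 < b'.+1 -> h i < h i.+1.
    move=> i Hi.
    have lt : val (psi (inord i)) < val (psi (inord i.+1)).
      apply: inc; rewrite !inordK //; lia.
    have le := leq_div2r a' (ltnW lt).
    have := ed (inord i) (inord i.+1).
    rewrite /mon_path !inordK ?eqxx //; last lia.
    move=> /(_ isT); rewrite /c /h; case: ifP => // /negbT ne _.
    by rewrite ltn_neqAle ne le.
  have := @chain_lb h _ ch b' (ltnSn b').
  have : h b' < b'.
    rewrite /h ltn_divLR //; apply: leq_trans (ltn_ord _) _; by rewrite mulnC.
  lia.
Qed.

Fixpoint Fk (N : nat) (c : 'I_N -> 'I_N -> nat) (k : nat) (v : 'I_N) : nat :=
  match k with
  | 0 => 0
  | k'.+1 => (\max_(u : 'I_N | (u < v) && (c u v == 2)) Fk c k' u).+1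
  end.

Lemma Fk_stable N (c : 'I_N -> 'I_N -> nat) k : forall v : 'I_N, v < k -> Fk c k.+1 v = Fk c k v.
Proof.
elim: k => [//|k IH] v Hv /=; congr _.+1; apply: eq_bigr => u /andP [uv _].
apply: IH; lia.
Qed.

Lemma Fk_stable2 N (c : 'I_N -> 'I_N -> nat) (v : 'I_N) k : v < k -> Fk c k v = Fk c v.+1 v.
Proof.
elim: k => [//|k IH] Hv.
rewrite leq_eqVlt in Hv; case/orP: Hv => [/eqP [->] //|Hv].
by rewrite Fk_stable // IH.
Qed.

Definition fl N (c : 'I_N -> 'I_N -> nat) (v : 'I_N) := Fk c v.+1 v.

Lemma flE N (c : 'I_N -> 'I_N -> nat) v :
  fl c v = (\max_(u : 'I_N | (u < v) && (c u v == 2)) fl c u).+1.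
Proof.
rewrite /fl /=; congr _.+1; apply: eq_bigr => u /andP [uv _].
exact: Fk_stable2.
Qed.

Lemma fl_lt N (c : 'I_N -> 'I_N -> nat) (u v : 'I_N) : u < v -> c u v = 2 -> fl c u < fl c v.
Proof.
move=> uv cuv; rewrite (flE c v) ltnS.
by apply: leq_bigmax_cond; rewrite uv cuv.
Qed.

Lemma fl_pred N (c : 'I_N -> 'I_N -> nat) (v : 'I_N) : 1 < fl c v ->
  exists u : 'I_N, [/\ u < v, c u v = 2 & fl c u = (fl c v).-1].
Proof.
rewrite flE ltnS /=.
case: (pickP [pred u : 'I_N | (u < v) && (c u v == 2)]) => [u Hu | none].
  case: (@arg_maxnP _ u _ (fl c) Hu) => w /andP [wv /eqP cw] mx _.
  exists w; split => //; apply/eqP; rewrite eqn_leq; apply/andP; split.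
    by apply: leq_bigmax_cond; rewrite wv cw.
  by apply/bigmax_leqP => i Pi; apply: mx.
by rewrite big_pred0.
Qed.

Lemma fl_ge1 N (c : 'I_N -> 'I_N -> nat) v : 0 < fl c v.
Proof. by rewrite flE. Qed.

Lemma fl_path N (c : 'I_N -> 'I_N -> nat) k : forall v : 'I_N, 0 < k -> k <= fl c v ->
  exists g : nat -> 'I_N, g k.-1 = v /\
    forall i, i.+1 < k -> g i < g i.+1 /\ c (g i) (g i.+1) = 2.
Proof.
elim: k => [//|k IH] v _ Hk.
case: (posnP k) => [k0|kpos].
  by exists (fun _ => v); split => // i; rewrite k0.
have [u [uv cuv fu]] : exists u : 'I_N, [/\ u < v, c u v = 2 & fl c u = (fl c v).-1].
  apply: fl_pred; lia.
have [g [gk gch]] := IH u kpos ltac:(lia).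
exists (fun i => if i == k then v else g i); split; first by rewrite /= eqxx.
move=> i Hi; case: (eqVneq i k) => [ik|ik]; first lia.
case: (eqVneq i.+1 k) => [ik1|ik1].
  by move: gk; rewrite -ik1 /= => ->.
apply: gch; lia.
Qed.
Lemma upper (a b : nat) (H : rel 'I_a) : 1 <= a -> 1 <= b -> simple_graph H ->
  arrows H (mon_path b) (1 + (a-1)*(b-1)).
Proof.
case: a H => [//|a'] H _; case: b => [//|b'] _ [Hsym Hirr].
have -> : 1 + (a'.+1 - 1) * (b'.+1 - 1) = (a' * b').+1 by rewrite !subn1 add1n.
move=> c [csym cval].
case: (boolP [exists v : 'I_(a' * b').+1, b'.+1 <= fl c v]) => [/existsP [v Hv] | none].
- right; have [g [gk gch]] := @fl_path _ c b'.+1 v (ltn0Sn b') Hv.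
  exists (fun i : 'I_b'.+1 => g i).
  have inc : forall u w : 'I_b'.+1, u < w -> g u < g w.
    move=> u w uw; apply: (@chain_lt (fun i => val (g i)) b'.+1) => //.
    by move=> i Hi; exact: (gch i Hi).1.
  split; [|split] => //.
  + move=> u w E; apply/eqP; case: (ltngtP u w) => [uw|wu|/val_inj -> //].
      by have := inc _ _ uw; rewrite E ltnn.
    by have := inc _ _ wu; rewrite E ltnn.
  + move=> u w; rewrite /mon_path => /orP [/eqP E| /eqP E].
      have Hu : u.+1 < b'.+1 by rewrite E.
      by have := (gch u Hu).2; rewrite E.
    have Hw : w.+1 < b'.+1 by rewrite E.
    by have := (gch w Hw).2; rewrite E csym.
- left.
  have allf : forall v, fl c v < b'.+1.
    move=> v; move/existsPn: none => /(_ v); lia.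
  have [k Hk] : exists k : 'I_b'.+1, a'.+1 <= #|[set v : 'I_(a' * b').+1 | fl c v == k]|.
    case: (boolP [exists k : 'I_b'.+1, a'.+1 <= #|[set v : 'I_(a' * b').+1 | fl c v == k]|]) => [/existsP [k0 Hk0]|nk]; first by exists k0.
    exfalso.
    have E : \sum_(v : 'I_(a' * b').+1) 1 = (a' * b').+1 by rewrite sum1_card card_ord.
    have : (a' * b').+1 <= b' * a'; last by lia.
    rewrite -E (partition_big (fun v => inord (fl c v) : 'I_b'.+1) xpredT) //=.
    rewrite big_ord_recl big1 ?add0n; last first.
      move=> v /eqP Ev; exfalso; have := @fl_ge1 _ c v; move: Ev => /(f_equal val).
      by rewrite /= inordK // => ->.
    apply: (@leq_trans (\sum_(i < b') a')).
      apply: leq_sum => j _.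
      rewrite (eq_bigl (fun v => fl c v == lift ord0 j)); last first.
        by move=> v; rewrite -val_eqE /= inordK.
      rewrite sum1dep_card.
      move: nk; rewrite negb_exists => /forallP /(_ (lift ord0 j)).
      by rewrite -ltnNge ltnS.
    by rewrite sum_nat_const card_ord.
  pose C := [set v : 'I_(a' * b').+1 | fl c v == k].
  pose s := enum C.
  have sz : a'.+1 <= size s by rewrite -cardE.
  have so : sorted ltn (map val s).
    rewrite /s -[enum _](eq_filter (mem_enum _)).
    rewrite -(eq_filter (mem_map val_inj _)) -filter_map.
    by rewrite (sorted_filter ltn_trans) // unlock val_ord_enum iota_ltn_sorted.
  pose phi (i : 'I_a'.+1) := nth ord0 s i.
  have inc : forall u w : 'I_a'.+1, u < w -> phi u < phi w.
    move=> u w uw.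
    have Hu : (val u) \in [pred n | n < size (map val s)].
      by rewrite inE size_map; apply: leq_trans sz; exact: ltn_ord.
    have Hw : (val w) \in [pred n | n < size (map val s)].
      by rewrite inE size_map; apply: leq_trans sz; exact: ltn_ord.
    have := sorted_ltn_nth ltn_trans 0 so _ _ Hu Hw uw.
    rewrite !(nth_map ord0) //; rewrite -(size_map val); [exact: Hw|exact: Hu].
  exists phi; split; [|split] => //.
  + move=> u w E; apply/eqP; case: (ltngtP u w) => [uw|wu|/val_inj -> //].
      by have := inc _ _ uw; rewrite E ltnn.
    by have := inc _ _ wu; rewrite E ltnn.
  + move=> u w Huw.
    have pC : forall x : 'I_a'.+1, fl c (phi x) = k.
      move=> x; apply/eqP.
      have : phi x \in C by rewrite -mem_enum mem_nth //; apply: leq_trans sz; exact: ltn_ord.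
      by rewrite inE.
    have ne : phi u != phi w.
      apply/negP => /eqP Ep.
      have uw : u = w.
        case: (ltngtP u w) => [uw|wu|/val_inj -> //].
          by have := inc _ _ uw; rewrite Ep ltnn.
        by have := inc _ _ wu; rewrite Ep ltnn.
      by move: Huw; rewrite uw Hirr.
    case: (cval _ _ ne) => // c2; exfalso.
    case: (ltngtP (phi u) (phi w)) => [lt|gt|eq].
    * by have := fl_lt lt c2; rewrite !pC ltnn.
    * have c2' : c (phi w) (phi u) = 2 by rewrite csym.
      by have := fl_lt gt c2'; rewrite !pC ltnn.
    * by move: ne; rewrite (val_inj eq) eqxx.
Qed.

Theorem theorem4p1 (a : nat) (H : rel 'I_a) :
  (1 <= a)%N -> simple_graph H -> connected_graph H ->
  forall b : nat, (1 <= b)%N ->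
    is_ord_ramsey H (mon_path b) (1 + (a - 1) * (b - 1)).
Proof.
move=> a1 Hs Hc b b1; split; first exact: upper.
by move=> n Hn; apply: lower.
Qed.
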